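(* Suppose the original system $x^+=f(x,u)$ is cost controllable on a set $S\subseteq\mathbb{R}^n$ (containing $0$ in its interior) with sequence $(B_N)_{N\in\mathbb{N}_0}$. Let $\bar N\in\mathbb{N}$ and suppose Assumption (EB) and Assumption (L) hold on a set $\Omega$ such that $S\oplus\mathcal{B}_{r(\bar N)\eta^\varepsilon}(0)\subseteq\Omega$ for all $\varepsilon\in(0,\bar\varepsilon]$, where $r(\bar N):=\sum_{i=0}^{\bar N-1}\bar L^i$. Then there exists, for every $\varepsilon\in(0,\bar\varepsilon]$, a monotonically increasing finite sequence $(B_N^\varepsilon)_{N\in[1:\bar N]}$ such that for each pair $(\hat x,N)\in S\times[1:\bar N]$ there exists $\mathbf{u}=\mathbf{u}(\hat x)\in\mathcal{U}_N$ with $$V_N^\varepsilon(\hat x)\le J_N^\varepsilon(\hat x,\mathbf{u})\le B_N^\varepsilon\,\ell^\star(\hat x),$$ and $\lim_{\varepsilon\searrow 0}B_N^\varepsilon=B_N$ for every $N\in[1:\bar N]$. The same statement holds with the roles of $f$ and $f^\varepsilon$ interchanged: if the surrogate $f^\varepsilon$ satisfies the growth bound $V^\varepsilon_N(\hat x)\le J^\varepsilon_N(\hat x,\mathbf u)\le B_N\ell^\star(\hat x)$ (with a control sequence keeping the surrogate trajectory in $S$), then the original dynamics $f$ satisfies a growth bound $J_N(\hat x,\mathbf u)\le B^\varepsilon_N\ell^\star(\hat x)$ on $S$ for all $N\in[1:\bar N]$ with $B_N^\varepsilon\to B_N$ as $\varepsilon\searrow0$.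
   Context: Let $\mathbb{U}\subset\mathbb{R}^m$ be convex and compact with $0$ in its interior. The original system is $x^+=f(x,u)$ with $f:\mathbb{R}^n\times\mathbb{U}\to\mathbb{R}^n$ continuous and $f(0,0)=0$. A family of surrogate models $x^+=f^\varepsilon(x,u)$, $f^\varepsilon:\mathbb{R}^n\times\mathbb{U}\to\mathbb{R}^n$, is given for $\varepsilon\in(0,\bar\varepsilon]$, $\bar\varepsilon>0$. Stage cost: $\ell(x,u)=x^\top Qx+u^\top Ru$ with $Q\in\mathbb{R}^{n\times n}$, $R\in\mathbb{R}^{m\times m}$ symmetric positive definite; $\ell^\star(x):=\min_{u\in\mathbb U}\ell(x,u)=\|x\|_Q^2=x^\top Qx$. For $N\in\mathbb{N}\cup\{\infty\}$, $\mathcal{U}_N$ is the set of sequences $\mathbf u=(u(k))_{k=0}^{N-1}\subset\mathbb{U}$ (admissible controls). For $\hat x\in\mathbb{R}^n$ and $\mathbf u\in\mathcal U_N$, $x_{\mathbf u}(0)=\hat x$, $x_{\mathbf u}(k+1)=f(x_{\mathbf u}(k),u(k))$, and $x^\varepsilon_{\mathbf u}(0)=\hat x$, $x^\varepsilon_{\mathbf u}(k+1)=f^\varepsilon(x^\varepsilon_{\mathbf u}(k),u(k))$. Costs: $J_N(\hat x,\mathbf u)=\sum_{k=0}^{N-1}\ell(x_{\mathbf u}(k),u(k))$, $J^\varepsilon_N(\hat x,\mathbf u)=\sum_{k=0}^{N-1}\ell(x^\varepsilon_{\mathbf u}(k),u(k))$; value functions $V_N(\hat x)=\inf_{\mathbf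 u\in\mathcal U_N}J_N(\hat x,\mathbf u)$, $V^\varepsilon_N(\hat x)=\inf_{\mathbf u\in\mathcal U_N}J^\varepsilon_N(\hat x,\mathbf u)$. Assumption (EB) on a set $\Omega\subseteq\mathbb{R}^n$ containing $0$ in its interior: there are constants $c_x^\varepsilon,c_u^\varepsilon,\eta^\varepsilon\ge0$ with $\lim_{\varepsilon\searrow0}\max\{c_x^\varepsilon,c_u^\varepsilon,\eta^\varepsilon\}=0$ such that for all $\varepsilon\in(0,\bar\varepsilon]$, $x\in\Omega$, $u\in\mathbb U$: $\|f(x,u)-f^\varepsilon(x,u)\|\le c_x^\varepsilon\|x\|+c_u^\varepsilon\|u\|$ (proportional bound) and $\|f(x,u)-f^\varepsilon(x,u)\|\le\eta^\varepsilon$ (uniform bound). Assumption (L) on $\Omega$: there are constants $L_f\ge0$ and $\bar L\ge0$ such that for all $x,y\in\Omega$, $u\in\mathbb U$, $\varepsilon\in(0,\bar\varepsilon]$: $\|f(x,u)-f(y,u)\|\le L_f\|x-y\|$ and $\|f^\varepsilon(x,u)-f^\varepsilon(y,u)\|\le L_{f^\varepsilon}\|x-y\|$ with $L_{f^\varepsilon}\le\bar L$. Cost controllability on $S$: there is a monotonically increasing bounded sequence $(B_N)_{N\in\mathbb N_0}$ such that for every $\hat x\in S$ there is $\mathbf u=\mathbf u(\hat x)\in\mathcal U_\infty$ with $x_{\mathbf u}(k)\in S$ for all $k\ge0$ and $V_N(\hat x)\le J_N(\hat x,\mathbf u)\le B_N\ell^\star(\hat x)$ for all $N\in\mathbb N$.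 $\oplus$ denotes Minkowski sum and $\mathcal B_r(0)$ the closed Euclidean ball of radius $r$. *)

(* Defs.v *)
From HB Require Import structures.
From mathcomp Require Import all_boot all_order all_algebra.
From mathcomp Require Import all_classical all_reals all_analysis.
Set Implicit Arguments. Unset Strict Implicit. Unset Printing Implicit Defensive.
Import Order.TTheory GRing.Theory Num.Theory.
Import numFieldNormedType.Exports.
Local Open Scope classical_set_scope.
Local Open Scope ring_scope.

Section Defs.
Variable R : realType.

Definition enorm k (x : 'rV[R]_k) : R := Num.sqrt (\sum_(i < k) x 0 i ^+ 2).

Definition qform k (Q : 'M[R]_k) (x : 'rV[R]_k) : R := (x *m Q *m x^T) 0 0.

Definition sym_posdef k (Q : 'M[R]_k) : Prop :=
  Q^T = Q /\ forall x : 'rV[R]_k, x != 0 -> 0 < qform Q x.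

Definition convexR k (U : set 'rV[R]_k) : Prop :=
  forall x y (t : R), U x -> U y -> 0 <= t <= 1 -> U (t *: x + (1 - t) *: y).

Variables n m : nat.
Implicit Types (Q : 'M[R]_n) (Rm : 'M[R]_m).

Definition stage Q Rm (x : 'rV[R]_n) (u : 'rV[R]_m) : R := qform Q x + qform Rm u.

(* l*(x) = min_{u in U} l(x,u) = x^T Q x (0 is in U, R pos. def.) *)
Definition lstar Q (x : 'rV[R]_n) : R := qform Q x.

Fixpoint traj (g : 'rV[R]_n -> 'rV[R]_m -> 'rV[R]_n) (xh : 'rV[R]_n)
  (u : nat -> 'rV[R]_m) (k : nat) : 'rV[R]_n :=
  match k with
  | 0 => xh
  | k'.+1 => g (traj g xh u k') (u k')
  end.

Definition admN (U : set 'rV[R]_m) (N : nat) (u : nat -> 'rV[R]_m) : Prop :=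
  forall k, (k < N)%N -> U (u k).
Definition adminf (U : set 'rV[R]_m) (u : nat -> 'rV[R]_m) : Prop :=
  forall k, U (u k).

Definition costJ Q Rm g (N : nat) (xh : 'rV[R]_n) (u : nat -> 'rV[R]_m) : R :=
  \sum_(k < N) stage Q Rm (traj g xh u k) (u k).

Definition valueV Q Rm (U : set 'rV[R]_m) g (N : nat) (xh : 'rV[R]_n) : R :=
  inf [set costJ Q Rm g N xh u | u in admN U N].

Definition cost_controllable Q Rm (U : set 'rV[R]_m) g (S : set 'rV[R]_n)
  (B : nat -> R) : Prop :=
  {homo B : N1 N2 / (N1 <= N2)%N >-> N1 <= N2} /\
  (exists M : R, forall N, B N <= M) /\
  forall xh, S xh -> exists u, adminf U u /\ (forall k, S (traj g xh u k)) /\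
    forall N, (0 < N)%N ->
      valueV Q Rm U g N xh <= costJ Q Rm g N xh u /\
      costJ Q Rm g N xh u <= B N * lstar Q xh.

Definition minkowski_ball_sub (S : set 'rV[R]_n) (rad : R) (Om : set 'rV[R]_n) : Prop :=
  forall x y, S x -> enorm y <= rad -> Om (x + y).

Definition rsum (L : R) (Nb : nat) : R := \sum_(i < Nb) L ^+ i.

End Defs.

(* Main.v *)
Require Import Defs.
From HB Require Import structures.
From mathcomp Require Import all_boot all_order all_algebra.
From mathcomp Require Import all_classical all_reals all_analysis.
From mathcomp Require Import ring lra.
Set Implicit Arguments. Unset Strict Implicit. Unset Printing Implicit Defensive.
Import Order.TTheory GRing.Theory Num.Theory.
Import numFieldNormedType.Exports.
Local Open Scope classical_set_scope.
Local Open Scope ring_scope.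

Section Enorm.
Variable R : realType.
Variable k : nat.
Implicit Types x y : 'rV[R]_k.

Lemma enorm_ge0 x : 0 <= enorm x.
Proof. exact: sqrtr_ge0. Qed.

Lemma sumsq_ge0 x : 0 <= \sum_(i < k) x 0 i ^+ 2.
Proof. by apply: sumr_ge0 => i _; exact: sqr_ge0. Qed.

Lemma enorm_sq x : enorm x ^+ 2 = \sum_(i < k) x 0 i ^+ 2.
Proof. by rewrite /enorm sqr_sqrtr // sumsq_ge0. Qed.

Lemma enorm0 : enorm (0 : 'rV[R]_k) = 0.
Proof. by rewrite /enorm big1 ?sqrtr0 // => i _; rewrite mxE expr0n. Qed.

Lemma enormZ a x : enorm (a *: x) = `|a| * enorm x.
Proof.
rewrite /enorm (eq_bigr (fun i => a ^+ 2 * x 0 i ^+ 2)); last first.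
  by move=> i _; rewrite mxE exprMn.
by rewrite -mulr_sumr sqrtrM ?sqr_ge0 // sqrtr_sqr.
Qed.

Lemma coord_le_enorm x i : `|x 0 i| <= enorm x.
Proof.
rewrite -(sqrtr_sqr (x 0 i)) /enorm ler_sqrt ?sumsq_ge0 //.
rewrite (bigD1 i) //= lerDl; apply: sumr_ge0 => j _; exact: sqr_ge0.
Qed.

Lemma enormN x : enorm (- x) = enorm x.
Proof. by rewrite -scaleN1r enormZ normrN normr1 mul1r. Qed.

Lemma enormB x y : enorm (x - y) = enorm (y - x).
Proof. by rewrite -enormN opprB. Qed.

Lemma enorm_eq0 x : enorm x = 0 -> forall i, x 0 i = 0.
Proof.
move=> h i; apply/eqP; rewrite -normr_eq0 eq_le normr_ge0 andbT.
by rewrite -h coord_le_enorm.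
Qed.

Lemma cauchy_schwarz x y : \sum_(i < k) x 0 i * y 0 i <= enorm x * enorm y.
Proof.
have [hx|hx] := eqVneq (enorm x) 0.
  rewrite hx mul0r big1 // => i _; by rewrite (enorm_eq0 hx) mul0r.
have [hy|hy] := eqVneq (enorm y) 0.
  rewrite hy mulr0 big1 // => i _; by rewrite (enorm_eq0 hy) mulr0.
have hp : 0 < enorm x * enorm y by rewrite mulr_gt0 // lt0r ?hx ?hy ?enorm_ge0.
have key : forall i, 2 * (enorm x * enorm y) * (x 0 i * y 0 i) <=
   x 0 i ^+ 2 * enorm y ^+ 2 + y 0 i ^+ 2 * enorm x ^+ 2.
  move=> i; rewrite -subr_ge0.
  have -> : x 0 i ^+ 2 * enorm y ^+ 2 + y 0 i ^+ 2 * enorm x ^+ 2 -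
     2 * (enorm x * enorm y) * (x 0 i * y 0 i) =
     (x 0 i * enorm y - y 0 i * enorm x) ^+ 2 by ring.
  exact: sqr_ge0.
have h : \sum_(i < k) 2 * (enorm x * enorm y) * (x 0 i * y 0 i) <=
   \sum_(i < k) (x 0 i ^+ 2 * enorm y ^+ 2 + y 0 i ^+ 2 * enorm x ^+ 2).
  by apply: ler_sum => i _; exact: key.
move: h; rewrite big_split /= -!mulr_suml -!mulr_sumr -!enorm_sq => h.
rewrite -(ler_pM2l (_ : 0 < 2 * (enorm x * enorm y))); last by rewrite mulr_gt0.
apply: (le_trans h); rewrite le_eqVlt; apply/orP; left; apply/eqP; ring.
Qed.

Lemma enormD x y : enorm (x + y) <= enorm x + enorm y.
Proof.
rewrite -(ler_pXn2r (_ : (0 < 2)%N)) ?nnegrE ?addr_ge0 ?enorm_ge0 //.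
rewrite enorm_sq (eq_bigr (fun i => x 0 i ^+ 2 + y 0 i ^+ 2 + 2 * (x 0 i * y 0 i))); last first.
  by move=> i _; rewrite mxE; ring.
rewrite !big_split /= -mulr_sumr -!enorm_sq.
have := cauchy_schwarz x y => h.
have -> : (enorm x + enorm y) ^+ 2 = enorm x ^+ 2 + enorm y ^+ 2 + 2 * (enorm x * enorm y) by ring.
by rewrite lerD2l ler_pM2l.
Qed.

End Enorm.

Section Qform.
Variable R : realType.
Variable k : nat.
Variable Q : 'M[R]_k.
Implicit Types x y : 'rV[R]_k.

Definition bil x y := (x *m Q *m y^T) 0 0.
Definition MQ := \sum_(i < k) \sum_(j < k) `|Q i j|.

Lemma MQ_ge0 : 0 <= MQ.
Proof. by apply: sumr_ge0 => i _; apply: sumr_ge0 => j _; exact: normr_ge0. Qed.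

Lemma bilE x y : bil x y = \sum_(i < k) \sum_(j < k) x 0 i * Q i j * y 0 j.
Proof.
rewrite /bil mxE exchange_big /=; apply: eq_bigr => j _.
by rewrite !mxE mulr_suml.
Qed.

Lemma bil_bound x y : `|bil x y| <= MQ * (enorm x * enorm y).
Proof.
rewrite bilE /MQ mulr_suml.
apply: (le_trans (ler_norm_sum _ _ _)); apply: ler_sum => i _.
rewrite mulr_suml.
apply: (le_trans (ler_norm_sum _ _ _)); apply: ler_sum => j _.
have h := ler_pM (normr_ge0 _) (normr_ge0 _) (coord_le_enorm x i) (coord_le_enorm y j).
rewrite !normrM (_ : `|x 0 i| * `|Q i j| * `|y 0 j| = `|Q i j| * (`|x 0 i| * `|y 0 j|)); last by ring.
by rewrite ler_wpM2l ?normr_ge0.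
Qed.

Lemma qform_bil x : qform Q x = bil x x.
Proof. by []. Qed.

Lemma bilDl x y z : bil (x + y) z = bil x z + bil y z.
Proof. by rewrite /bil !mulmxDl mxE. Qed.
Lemma bilDr x y z : bil x (y + z) = bil x y + bil x z.
Proof. by rewrite /bil linearD /= mulmxDr mxE. Qed.
Lemma bilZl a x y : bil (a *: x) y = a * bil x y.
Proof. by rewrite /bil -!scalemxAl mxE. Qed.
Lemma bilZr a x y : bil x (a *: y) = a * bil x y.
Proof. by rewrite /bil linearZ /= -scalemxAr mxE. Qed.

Lemma qformZ a x : qform Q (a *: x) = a ^+ 2 * qform Q x.
Proof. by rewrite !qform_bil bilZl bilZr mulrA -expr2. Qed.

Lemma qform0 : qform Q 0 = 0.
Proof. by rewrite -(scale0r (0 : 'rV[R]_k)) qformZ expr0n mul0r. Qed.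

Lemma qformD_le x d :
  qform Q (x + d) <= qform Q x + MQ * (2 * enorm x * enorm d + enorm d ^+ 2).
Proof.
rewrite !qform_bil bilDl !bilDr -!addrA lerD2l.
have h1 := bil_bound x d; have h2 := bil_bound d x; have h3 := bil_bound d d.
have := ler_norm (bil x d); have := ler_norm (bil d x); have := ler_norm (bil d d).
move=> a1 a2 a3.
have -> : MQ * (2 * enorm x * enorm d + enorm d ^+ 2) =
  MQ * (enorm x * enorm d) + (MQ * (enorm d * enorm x) + MQ * (enorm d * enorm d)) by ring.
apply: lerD; first exact: le_trans a3 h1.
apply: lerD; [exact: le_trans a2 h2 | exact: le_trans a1 h3].
Qed.

Lemma qform_ge0 : sym_posdef Q -> forall x, 0 <= qform Q x.
Proof.
move=> [_ hQ] x; have [->|hx] := eqVneq x 0; first by rewrite qform0.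
exact/ltW/hQ.
Qed.

End Qform.

Section Lmin.
Variable R : realType.

Lemma cont_sum (T : topologicalType) (I : Type) (r : seq I) (F : I -> T -> R) :
  (forall i, continuous (F i)) -> continuous (fun x => \sum_(i <- r) F i x).
Proof.
move=> hF; elim: r => [|a r IH].
  under eq_fun do rewrite big_nil; exact: cst_continuous.
under eq_fun do rewrite big_cons.
move=> x; exact: (continuousD (hF a x) (IH x)).
Qed.

Variable k : nat.

Lemma coordc i : continuous (fun x : 'rV[R]_k => x 0 i).
Proof. exact: coord_continuous. Qed.

Lemma qform_cont (Q : 'M[R]_k) : continuous (qform Q).
Proof.
have -> : qform Q = fun x => \sum_(i < k) \sum_(j < k) x 0 i * Q i j * x 0 j.
  by apply: funext => x; rewrite qform_bil bilE.
apply: cont_sum => i; apply: cont_sum => j x.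
apply: (@continuousM _ _ (fun y : 'rV[R]_k => y 0 i * Q i j) (fun y => y 0 j) x _ (@coordc j x)).
apply: (@continuousM _ _ (fun y : 'rV[R]_k => y 0 i) (fun=> Q i j) x (@coordc i x)); exact: cst_continuous.
Qed.

Lemma enorm_cont : continuous (@enorm R k).
Proof.
move=> x; apply: (@continuous_comp _ _ _ (fun x : 'rV[R]_k => \sum_(i < k) x 0 i ^+ 2) Num.sqrt).
  apply: cont_sum => i y.
  exact: (@continuousM _ _ (fun y : 'rV[R]_k => y 0 i) (fun y : 'rV[R]_k => y 0 i) y (@coordc i y) (@coordc i y)).
exact: sqrt_continuous.
Qed.

Lemma qform_lb (Q : 'M[R]_k) : sym_posdef Q ->
  exists2 c, 0 < c & forall x, c * enorm x ^+ 2 <= qform Q x.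
Proof.
move=> hQ; set A := [set x : 'rV[R]_k | enorm x = 1].
have key : forall c, (forall y, A y -> c <= qform Q y) ->
    forall x, c * enorm x ^+ 2 <= qform Q x.
  move=> c hc x; have [e0|e0] := eqVneq (enorm x) 0.
    by rewrite e0 expr0n mulr0 qform_ge0.
  have ep : 0 < enorm x by rewrite lt0r e0 enorm_ge0.
  have Ay : A ((enorm x)^-1 *: x).
    by rewrite /A /= enormZ ger0_norm ?invr_ge0 ?enorm_ge0 // mulVf.
  have := hc _ Ay; rewrite qformZ => h.
  have := ler_wpM2r (ltW (exprn_gt0 2 ep)) h.
  by rewrite exprVn mulrAC mulVf ?mul1r // expf_neq0.
case: (pselect (A !=set0)) => [A0|A0]; last first.
  exists 1 => //; apply: key => y Ay; exfalso; apply: A0; by exists y.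
have cA : compact A.
  apply: bounded_closed_compact.
    rewrite /= /bounded_near; near=> M => y /= Ay.
    rewrite [leLHS]/Num.norm /= mx_normrE; apply: bigmax_le => [|[i j] _ /=]; first by [].
    rewrite ord1; apply: le_trans (coord_le_enorm _ _) _; rewrite Ay.
    near: M; apply: nbhs_pinfty_ge; exact: num_real.
  have -> : A = (@enorm R k) @^-1` [set 1] by [].
  by move: (@enorm_cont); rewrite continuous_closedP => /(_ _ (@closed_eq _ 1)).
have [x0 Ax0 hmin] := EVT_min_rV A0 cA (continuous_subspaceT (@qform_cont Q)).
exists (qform Q x0).
  case: hQ => _ hQ; apply: hQ; apply/eqP => x00.
  by move: Ax0; rewrite inE /A /= x00 enorm0 => /eqP; rewrite eq_sym oner_eq0.
apply: key => y Ay; apply: hmin; by rewrite inE.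
Unshelve. all: by end_near.
Qed.

End Lmin.

Section Rsum.
Variable R : realType.
Lemma rsumS (L : R) k : rsum L k.+1 = 1 + L * rsum L k.
Proof. by rewrite /rsum big_ord_recl expr0 mulr_sumr; congr (_ + _); apply: eq_bigr => i _; rewrite exprS. Qed.
Lemma rsum_ge0 (L : R) k : 0 <= L -> 0 <= rsum L k.
Proof. by move=> L0; apply: sumr_ge0 => i _; exact: exprn_ge0. Qed.
Lemma rsum_le (L : R) k N : 0 <= L -> (k <= N)%N -> rsum L k <= rsum L N.
Proof.
move=> L0; elim: N => [|N IH]; first by rewrite leqn0 => /eqP ->.
rewrite leq_eqVlt => /orP [/eqP -> //| ]; rewrite ltnS => /IH h.
apply: le_trans h _; rewrite /rsum big_ord_recr /= lerDl; exact: exprn_ge0.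
Qed.
End Rsum.

Section Traj.
Variables (R : realType) (n m : nat) (U : set 'rV[R]_m).

Lemma traj_err (g h : 'rV[R]_n -> 'rV[R]_m -> 'rV[R]_n) (L c1 c2 et X W : R)
  (xh : 'rV[R]_n) (u : nat -> 'rV[R]_m) (Nb : nat) (S Om : set 'rV[R]_n) :
  0 <= L -> 0 <= et -> 0 <= c1 -> 0 <= c2 ->
  (forall x y w, Om x -> Om y -> U w -> enorm (h x w - h y w) <= L * enorm (x - y)) ->
  (forall x w, S x -> U w -> enorm (h x w - g x w) <= c1 * enorm x + c2 * enorm w /\
                             enorm (h x w - g x w) <= et) ->
  minkowski_ball_sub S (rsum L Nb * et) Om ->
  (forall k, S (traj g xh u k)) -> (forall k, U (u k)) ->
  (forall k, (k < Nb)%N -> enorm (traj g xh u k) <= X /\ enorm (u k) <= W) ->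
  forall k, (k < Nb)%N ->
    enorm (traj h xh u k - traj g xh u k) <= rsum L k * et /\
    enorm (traj h xh u k - traj g xh u k) <= rsum L k * (c1 * X + c2 * W).
Proof.
move=> L0 et0 c10 c20 hL hE hB hS hU hXW.
have rad0 : 0 <= rsum L Nb * et by rewrite mulr_ge0 ?rsum_ge0.
elim=> [_|k IH hk].
  by rewrite /= subrr enorm0 /rsum big_ord0 !mul0r.
have hk' : (k < Nb)%N by apply: ltn_trans hk.
have [IH1 IH2] := IH hk'.
set xe := traj h xh u k; set x := traj g xh u k.
have Omx : Om x by rewrite -[x]addr0; apply: (hB x 0); [exact: hS | by rewrite enorm0].
have Omxe : Om xe.
  rewrite -[xe](addrNK x) addrC; apply: (hB x (xe - x)); first exact: hS.
  apply: le_trans IH1 _; apply: ler_wpM2r => //; apply: rsum_le => //; exact: ltnW.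
have -> : traj h xh u k.+1 - traj g xh u k.+1 =
   (h xe (u k) - h x (u k)) + (h x (u k) - g x (u k)) by rewrite /= addrA subrK.
have hl := hL _ _ _ Omxe Omx (hU k).
have [e1 e2] := hE _ _ (hS k) (hU k).
have [hX hW] := hXW _ hk'.
rewrite rsumS; split.
  apply: le_trans (enormD _ _) _.
  rewrite mulrDl mul1r addrC; apply: lerD => //.
  by apply: le_trans hl _; rewrite -mulrA ler_wpM2l.
apply: le_trans (enormD _ _) _.
rewrite mulrDl mul1r addrC; apply: lerD.
  by apply: le_trans e1 _; apply: lerD; apply: ler_wpM2l.
by apply: le_trans hl _; rewrite -mulrA ler_wpM2l.
Qed.

End Traj.

Section Cost.
Variables (R : realType) (n m : nat) (Q : 'M[R]_n) (Rm : 'M[R]_m).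
Hypotheses (hQ : sym_posdef Q) (hR : sym_posdef Rm).

Lemma stage_ge0 x w : 0 <= stage Q Rm x w.
Proof. by rewrite /stage addr_ge0 ?qform_ge0. Qed.

Lemma costJ_ge0 g N xh u : 0 <= costJ Q Rm g N xh u.
Proof. by apply: sumr_ge0 => k _; exact: stage_ge0. Qed.

Lemma term_le_costJ g N xh u k : (k < N)%N ->
  qform Q (traj g xh u k) <= costJ Q Rm g N xh u /\
  qform Rm (u k) <= costJ Q Rm g N xh u.
Proof.
move=> kN; have le1 : stage Q Rm (traj g xh u k) (u k) <= costJ Q Rm g N xh u.
  rewrite /costJ (bigD1 (Ordinal kN)) //= lerDl.
  by apply: sumr_ge0 => i _; exact: stage_ge0.
split; apply: le_trans le1; rewrite /stage ?lerDl ?lerDr qform_ge0 //.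
Qed.

Lemma valueV_le U g N xh u : admN U N u -> valueV Q Rm U g N xh <= costJ Q Rm g N xh u.
Proof.
move=> hu; apply: ge_inf; last by exists u.
by exists 0 => _ [v _ <-]; exact: costJ_ge0.
Qed.

Lemma cost_pert g h N xh u (rho X : R) : 0 <= rho ->
  (forall k, (k < N)%N -> enorm (traj g xh u k) <= X /\
      enorm (traj h xh u k - traj g xh u k) <= rho) ->
  costJ Q Rm h N xh u <= costJ Q Rm g N xh u + N%:R * (MQ Q * (2 * X * rho + rho ^+ 2)).
Proof.
move=> rho0 hk.
have -> : N%:R * (MQ Q * (2 * X * rho + rho ^+ 2)) =
   \sum_(k < N) (MQ Q * (2 * X * rho + rho ^+ 2)).
  by rewrite sumr_const card_ord mulr_natl.
rewrite /costJ -big_split /=; apply: ler_sum => k _.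
have [hX hd] := hk _ (ltn_ord k).
rewrite /stage addrAC lerD2r.
rewrite -[traj h xh u k](addrNK (traj g xh u k)) [_ - _ + _]addrC.
apply: le_trans (qformD_le _ _ _) _; rewrite lerD2l.
apply: ler_wpM2l; first exact: MQ_ge0.
have e0 := enorm_ge0 (traj g xh u k); have d0 := enorm_ge0 (traj h xh u k - traj g xh u k).
apply: lerD.
  by rewrite -!mulrA ler_wpM2l // ler_pM.
by rewrite ler_pXn2r ?nnegrE.
Qed.

End Cost.

Lemma le_of_sq (R : realType) (p q : R) : 0 <= q -> p ^+ 2 <= q ^+ 2 -> p <= q.
Proof.
move=> q0 h; have [p0|p0] := leP 0 p; last by apply: le_trans (ltW p0) q0.
by rewrite -(ler_pXn2r (_ : (0 < 2)%N)) ?nnegrE.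
Qed.

Section Direction.
Variables (R : realType) (n m : nat) (U : set 'rV[R]_m).

Lemma direction (Q : 'M[R]_n) (Rm : 'M[R]_m)
  (g h : R -> 'rV[R]_n -> 'rV[R]_m -> 'rV[R]_n) (epsb : R)
  (S Om : set 'rV[R]_n) (B : nat -> R) (Nb : nat) (c1 c2 et : R -> R) (L : R) :
  0 < epsb -> sym_posdef Q -> sym_posdef Rm -> (0 < Nb)%N -> 0 <= L ->
  (forall e, 0 < e <= epsb -> 0 <= c1 e /\ 0 <= c2 e /\ 0 <= et e) ->
  c1 @ 0^'+ --> (0 : R) -> c2 @ 0^'+ --> (0 : R) ->
  (forall e, 0 < e <= epsb -> forall x y w, Om x -> Om y -> U w ->
       enorm (h e x w - h e y w) <= L * enorm (x - y)) ->
  (forall e x w, 0 < e <= epsb -> S x -> U w ->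
       enorm (h e x w - g e x w) <= c1 e * enorm x + c2 e * enorm w /\
       enorm (h e x w - g e x w) <= et e) ->
  (forall e, 0 < e <= epsb -> cost_controllable Q Rm U (g e) S B) ->
  (forall e, 0 < e <= epsb -> minkowski_ball_sub S (rsum L Nb * et e) Om) ->
   exists Beps : R -> nat -> R,
     (forall e, 0 < e <= epsb ->
        (forall N1 N2, (1 <= N1)%N -> (N1 <= N2)%N -> (N2 <= Nb)%N ->
           Beps e N1 <= Beps e N2) /\
        (forall xh N, S xh -> (1 <= N <= Nb)%N ->
           exists u, admN U N u /\
             valueV Q Rm U (h e) N xh <= costJ Q Rm (h e) N xh u /\
             costJ Q Rm (h e) N xh u <= Beps e N * lstar Q xh)) /\
     (forall N, (1 <= N <= Nb)%N -> (fun e => Beps e N) @ 0^'+ --> B N).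
Proof.
move=> epsb0 hQ hR Nb0 L0 hc hc1 hc2 hL hE hCC hB.
have [cQ cQ0 hcQ] := qform_lb hQ.
have [cR cR0 hcR] := qform_lb hR.
have epsbr : 0 < epsb <= epsb by rewrite epsb0 lexx.
have [Bmono _] := (hCC _ epsbr).
set B' := Num.max (B Nb) 0.
have B'0 : 0 <= B' by rewrite le_max lexx orbT.
set Cx := Num.sqrt (B' / cQ); set Cu := Num.sqrt (B' / cR).
have Cx0 : 0 <= Cx by exact: sqrtr_ge0.
have Cu0 : 0 <= Cu by exact: sqrtr_ge0.
set r := fun e => rsum L Nb * (c1 e * Cx + c2 e * Cu).
have r0 : forall e, 0 < e <= epsb -> 0 <= r e.
  move=> e he; have [h1 [h2 _]] := hc e he.
  by rewrite /r mulr_ge0 ?rsum_ge0 ?addr_ge0 ?mulr_ge0.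
exists (fun e N => B N + N%:R * (MQ Q * (2 * Cx * r e + r e ^+ 2))).
split.
  move=> e he; split.
    move=> N1 N2 _ N12 _; apply: lerD; first exact: Bmono.
    apply: ler_wpM2r; last by rewrite ler_nat.
    have re0 := r0 e he; apply: mulr_ge0; first exact: MQ_ge0.
    apply: addr_ge0; last exact: sqr_ge0.
    by apply: mulr_ge0; [apply: mulr_ge0|exact: re0].
  move=> xh N Sxh /andP [N1 NNb].
  have [_ [_ hcc]] := hCC e he.
  have [u [uad [uS uJ]]] := hcc xh Sxh.
  have uN : admN U N u by move=> k _; exact: uad.
  exists u; split => //; split; first exact: valueV_le.
  set a := Num.sqrt (lstar Q xh).
  have l0 : 0 <= lstar Q xh by exact: qform_ge0.
  have a0 : 0 <= a by exact: sqrtr_ge0.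
  have a2 : a ^+ 2 = lstar Q xh by rewrite sqr_sqrtr.
  have [_ JNb] := uJ _ Nb0.
  have JB : costJ Q Rm (g e) Nb xh u <= B' * a ^+ 2.
    apply: le_trans JNb _; rewrite a2 ler_wpM2r //; by rewrite le_max lexx.
  have hXW : forall k, (k < Nb)%N ->
      enorm (traj (g e) xh u k) <= Cx * a /\ enorm (u k) <= Cu * a.
    move=> k kNb; have [t1 t2] := term_le_costJ hQ hR (g e) xh u kNb.
    split; apply: le_of_sq; rewrite ?mulr_ge0 // exprMn.
      rewrite [Cx ^+ 2]sqr_sqrtr ?divr_ge0 ?(ltW cQ0) //.
      rewrite mulrAC ler_pdivlMr //; apply: le_trans JB; apply: le_trans t1.
      by rewrite mulrC hcQ.
    rewrite [Cu ^+ 2]sqr_sqrtr ?divr_ge0 ?(ltW cR0) //.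
    rewrite mulrAC ler_pdivlMr //; apply: le_trans JB; apply: le_trans t2.
    by rewrite mulrC hcR.
  have [c10 [c20 et0]] := hc e he.
  have hE' : forall x w, S x -> U w ->
      enorm (h e x w - g e x w) <= c1 e * enorm x + c2 e * enorm w /\
      enorm (h e x w - g e x w) <= et e.
    by move=> x w; exact: hE.
  have herr := traj_err L0 et0 c10 c20 (hL e he) hE' (hB e he) uS uad hXW.
  have hcp := cost_pert Q Rm (g:=g e) (h:=h e) (N:=N) (xh:=xh) (u:=u) (X:=Cx * a)
      (mulr_ge0 (r0 e he) a0).
  apply: le_trans (hcp _) _.
    move=> k kN; have kNb : (k < Nb)%N by apply: leq_trans kN NNb.
    split; first by have [] := hXW _ kNb.
    have [_ e2] := herr _ kNb; apply: le_trans e2 _.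
    rewrite (_ : r e * a = rsum L Nb * (c1 e * (Cx * a) + c2 e * (Cu * a))); last by rewrite /r; ring.
    apply: ler_wpM2r; last by apply: rsum_le => //; exact: ltnW.
    by rewrite addr_ge0 // !mulr_ge0.
  have [_ JN] := uJ _ (leq_trans (isT : (0 < 1)%N) N1).
  rewrite [X in _ <= X]mulrDl; apply: lerD => //.
  rewrite -a2 (_ : 2 * (Cx * a) * (r e * a) + (r e * a) ^+ 2 =
     (2 * Cx * r e + r e ^+ 2) * a ^+ 2); last by ring.
  by rewrite !mulrA.
move=> N _.
have hr : r @ 0^'+ --> (0 : R).
  have H : (fun x => rsum L Nb * (c1 x * Cx + c2 x * Cu)) @ 0^'+ -->
      rsum L Nb * (0 * Cx + 0 * Cu).
    exact: (cvgMl_tmp (cvgD (cvgMr_tmp hc1) (cvgMr_tmp hc2))).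
  by move: H; rewrite !mul0r addr0 mulr0.
have H : (fun e => B N + N%:R * (MQ Q * (2 * Cx * r e + r e ^+ 2))) @ 0^'+ -->
    B N + N%:R * (MQ Q * (2 * Cx * 0 + 0 * 0)).
  exact: (cvgD (cvg_cst (B N)) (cvgMl_tmp (cvgMl_tmp
     (cvgD (cvgMl_tmp hr) (cvgM hr hr))))).
by move: H; rewrite !mulr0 addr0 !mulr0 addr0.
Qed.

End Direction.

Lemma ball_sub (R : realType) n (S Om : set 'rV[R]_n) rad :
  minkowski_ball_sub S rad Om -> 0 <= rad -> forall x, S x -> Om x.
Proof. by move=> hB r0 x Sx; rewrite -[x]addr0; apply: (hB x 0) => //; rewrite enorm0. Qed.

Lemma squeeze0 (R : realType) (epsb : R) (c M : R -> R) : 0 < epsb ->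
  (forall e, 0 < e <= epsb -> 0 <= c e /\ c e <= M e) ->
  M @ 0^'+ --> (0 : R) -> c @ 0^'+ --> (0 : R).
Proof.
move=> e0 hc hM.
apply: (@squeeze_cvgr _ _ _ _ (fun=> 0) M) => //; last exact: cvg_cst.
near=> e.
have he : 0 < e <= epsb.
  apply/andP; split; near: e; [exact: nbhs_right_gt | exact: nbhs_right_le].
have [h1 h2] := hc e he; by rewrite h1 h2.
Unshelve. all: end_near.
Qed.

Unset Implicit Arguments.
Theorem mainTheorem1 (R : realType) (n m : nat)
  (U : set 'rV[R]_m) (f : 'rV[R]_n -> 'rV[R]_m -> 'rV[R]_n)
  (epsb : R) (feps : R -> 'rV[R]_n -> 'rV[R]_m -> 'rV[R]_n)
  (Q : 'M[R]_n) (Rm : 'M[R]_m)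
  (S Om : set 'rV[R]_n) (B : nat -> R) (Nb : nat)
  (cx cu eta : R -> R) (Lf Lbar : R) :
  (* standing assumptions *)
  convexR U -> compact U -> interior U 0 ->
  {within [set p : 'rV[R]_n * 'rV[R]_m | U p.2], continuous (fun p => f p.1 p.2)} ->
  f 0 0 = 0 ->
  0 < epsb ->
  sym_posdef Q -> sym_posdef Rm ->
  interior S 0 -> interior Om 0 ->
  (0 < Nb)%N ->
  (* Assumption (EB) on Om *)
  (forall e, 0 < e <= epsb -> 0 <= cx e /\ 0 <= cu e /\ 0 <= eta e) ->
  (fun e => Num.max (cx e) (Num.max (cu e) (eta e))) @ 0^'+ --> (0 : R) ->
  (forall e x u, 0 < e <= epsb -> Om x -> U u ->
     enorm (f x u - feps e x u) <= cx e * enorm x + cu e * enorm u /\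
     enorm (f x u - feps e x u) <= eta e) ->
  (* Assumption (L) on Om *)
  0 <= Lf -> 0 <= Lbar ->
  (forall x y u, Om x -> Om y -> U u -> enorm (f x u - f y u) <= Lf * enorm (x - y)) ->
  (forall e, 0 < e <= epsb -> exists Lfe, 0 <= Lfe <= Lbar /\
     forall x y u, Om x -> Om y -> U u ->
       enorm (feps e x u - feps e y u) <= Lfe * enorm (x - y)) ->
  (* first statement: original cost controllable => surrogate growth bound *)
  (cost_controllable Q Rm U f S B ->
   (forall e, 0 < e <= epsb -> minkowski_ball_sub S (rsum Lbar Nb * eta e) Om) ->
   exists Beps : R -> nat -> R,
     (forall e, 0 < e <= epsb ->
        (forall N1 N2, (1 <= N1)%N -> (N1 <= N2)%N -> (N2 <= Nb)%N ->
           Beps e N1 <= Beps e N2) /\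
        (forall xh N, S xh -> (1 <= N <= Nb)%N ->
           exists u, admN U N u /\
             valueV Q Rm U (feps e) N xh <= costJ Q Rm (feps e) N xh u /\
             costJ Q Rm (feps e) N xh u <= Beps e N * lstar Q xh)) /\
     (forall N, (1 <= N <= Nb)%N -> (fun e => Beps e N) @ 0^'+ --> B N))
  /\
  (* second statement: roles of f and feps interchanged *)
  ((forall e, 0 < e <= epsb -> cost_controllable Q Rm U (feps e) S B) ->
   (forall e, 0 < e <= epsb -> minkowski_ball_sub S (rsum Lf Nb * eta e) Om) ->
   exists Beps : R -> nat -> R,
     (forall e, 0 < e <= epsb ->
        (forall N1 N2, (1 <= N1)%N -> (N1 <= N2)%N -> (N2 <= Nb)%N ->
           Beps e N1 <= Beps e N2) /\
        (forall xh N, S xh -> (1 <= N <= Nb)%N ->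
           exists u, admN U N u /\
             valueV Q Rm U f N xh <= costJ Q Rm f N xh u /\
             costJ Q Rm f N xh u <= Beps e N * lstar Q xh)) /\
     (forall N, (1 <= N <= Nb)%N -> (fun e => Beps e N) @ 0^'+ --> B N)).
Proof.
move=> _ _ _ _ _ epsb0 hQ hR _ _ Nb0 hc hmax hEB Lf0 Lb0 hLf hLe.
have epsbr : 0 < epsb <= epsb by rewrite epsb0 lexx.
have hcx : cx @ 0^'+ --> (0 : R).
  apply: (squeeze0 epsb0 _ hmax) => e he; have [h1 [h2 h3]] := hc e he.
  by rewrite h1 le_max lexx.
have hcu : cu @ 0^'+ --> (0 : R).
  apply: (squeeze0 epsb0 _ hmax) => e he; have [h1 [h2 h3]] := hc e he.
  by rewrite h2 !le_max lexx orbT.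
split.
  move=> hCC hB.
  have SOm : forall x, S x -> Om x.
    apply: (ball_sub (hB _ epsbr)); have [_ [_ h3]] := hc _ epsbr.
    by rewrite mulr_ge0 ?rsum_ge0.
  apply: (direction (g := fun _ => f) (h := feps) (c1 := cx) (c2 := cu) (et := eta)
     (Om := Om) (S := S) (B := B) (U := U)
     epsb0 hQ hR Nb0 Lb0 hc hcx hcu).
  - move=> e he x y w Ox Oy Uw; have [Le [/andP [Le0 LeL] hle]] := hLe e he.
    apply: le_trans (hle _ _ _ Ox Oy Uw) _.
    by apply: ler_wpM2r => //; exact: enorm_ge0.
  - move=> e x w he Sx Uw; rewrite !(enormB (feps e x w)).
    exact: (hEB e x w he (SOm x Sx) Uw).
  - by move=> e _.
  - exact: hB.
move=> hCC hB.
have SOm : forall x, S x -> Om x.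
  apply: (ball_sub (hB _ epsbr)); have [_ [_ h3]] := hc _ epsbr.
  by rewrite mulr_ge0 ?rsum_ge0.
apply: (direction (g := feps) (h := fun _ => f) (c1 := cx) (c2 := cu) (et := eta)
   (Om := Om) (S := S) (B := B) (U := U)
   epsb0 hQ hR Nb0 Lf0 hc hcx hcu).
- move=> e _; exact: hLf.
- move=> e x w he Sx Uw; exact: (hEB e x w he (SOm x Sx) Uw).
- exact: hCC.
- exact: hB.
Qed.
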